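(* Let $\Omega\subset\mathbb{C}$ be a simply connected open set with conformal coordinate $z=x+iy$, let $N:\Omega\to\mathbb{S}^2$ be a smooth harmonic map and let $f:\Omega\to\mathbb{R}^3$ satisfy $f_x=N\times N_y$, $f_y=-N\times N_x$. Let $p\in\Omega$ with $\operatorname{rank}(dN)_p\neq0$. Then, on a neighbourhood of $p$, $f$ is a parallel surface of a regular surface of constant mean curvature, i.e. there are a neighbourhood $U$ of $p$, a regular (immersed) surface $g:U\to\mathbb{R}^3$ with unit normal $N$ and constant mean curvature, and a constant $t$ such that $f=g+tN$ on $U$.
   Context: A smooth map $N:\Omega\to\mathbb{S}^2$ is harmonic iff $N\times(N_{xx}+N_{yy})=0$; the map $f$ (unique up to translation) is called the spherical frontal associated to $N$. A parallel of a surface $g$ with unit normal $N$ is a map of the form $g+tN$, $t\in\mathbb{R}$ constant. *)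

(* Defs.v *)
From Stdlib Require Import Reals List.
From Coquelicot Require Import Coquelicot.
Open Scope R_scope.

Definition vec := (R * R * R)%type.
Definition vx (v : vec) : R := fst (fst v).
Definition vy (v : vec) : R := snd (fst v).
Definition vz (v : vec) : R := snd v.
Definition mkv (a b c : R) : vec := (a, b, c).
Definition vzero : vec := mkv 0 0 0.
Definition vadd (u v : vec) : vec := mkv (vx u + vx v) (vy u + vy v) (vz u + vz v).
Definition vscal (t : R) (v : vec) : vec := mkv (t * vx v) (t * vy v) (t * vz v).
Definition vopp (v : vec) : vec := vscal (-1) v.
Definition dot (u v : vec) : R := vx u * vx v + vy u * vy v + vz u * vz v.
Definition cross (u v : vec) : vec :=
  mkv (vy u * vz v - vz u * vy v) (vz u * vx v - vx u * vz v) (vx u * vy v - vy u * vx v).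

(** Maps on the plane (coordinates z = x + i y identified with (x,y)). *)
Definition c1 (F : R -> R -> vec) : R -> R -> R := fun x y => vx (F x y).
Definition c2 (F : R -> R -> vec) : R -> R -> R := fun x y => vy (F x y).
Definition c3 (F : R -> R -> vec) : R -> R -> R := fun x y => vz (F x y).

Definition pdx (f : R -> R -> R) : R -> R -> R := fun x y => Derive (fun t => f t y) x.
Definition pdy (f : R -> R -> R) : R -> R -> R := fun x y => Derive (fun t => f x t) y.

(** Iterated partial derivative along a word of directions (true = x, false = y). *)
Fixpoint dpart (ds : list bool) (f : R -> R -> R) : R -> R -> R :=
  match ds with
  | nil => f
  | b :: ds' => (if b then pdx else pdy) (dpart ds' f)
  end.

Definition smooth_scalar (U : R -> R -> Prop) (f : R -> R -> R) : Prop :=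
  forall (ds : list bool) (x y : R), U x y ->
    ex_derive (fun t => dpart ds f t y) x /\
    ex_derive (fun t => dpart ds f x t) y /\
    continuity_2d_pt (dpart ds f) x y.

Definition smooth (U : R -> R -> Prop) (F : R -> R -> vec) : Prop :=
  smooth_scalar U (c1 F) /\ smooth_scalar U (c2 F) /\ smooth_scalar U (c3 F).

Definition Px (F : R -> R -> vec) : R -> R -> vec :=
  fun x y => mkv (pdx (c1 F) x y) (pdx (c2 F) x y) (pdx (c3 F) x y).
Definition Py (F : R -> R -> vec) : R -> R -> vec :=
  fun x y => mkv (pdy (c1 F) x y) (pdy (c2 F) x y) (pdy (c3 F) x y).

Definition has_px (F : R -> R -> vec) (x y : R) (v : vec) : Prop :=
  is_derive (fun t => c1 F t y) x (vx v) /\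
  is_derive (fun t => c2 F t y) x (vy v) /\
  is_derive (fun t => c3 F t y) x (vz v).
Definition has_py (F : R -> R -> vec) (x y : R) (v : vec) : Prop :=
  is_derive (fun t => c1 F x t) y (vx v) /\
  is_derive (fun t => c2 F x t) y (vy v) /\
  is_derive (fun t => c3 F x t) y (vz v).

Definition open2 (U : R -> R -> Prop) : Prop :=
  forall x y, U x y -> exists eps : posreal,
    forall x' y', (x' - x) ^ 2 + (y' - y) ^ 2 < eps ^ 2 -> U x' y'.

(** Paths/homotopies are parametrized on [0,1]
    (resp. [0,1]^2) and taken continuous on all of R (resp. R^2), which is
    no restriction (extend by clamping). *)
Definition simply_connected (U : R -> R -> Prop) : Prop :=
  (exists x y, U x y) /\
  (forall a1 a2 b1 b2, U a1 a2 -> U b1 b2 ->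
     exists g1 g2 : R -> R,
       (forall s, continuity_pt g1 s) /\ (forall s, continuity_pt g2 s) /\
       (forall s, 0 <= s <= 1 -> U (g1 s) (g2 s)) /\
       g1 0 = a1 /\ g2 0 = a2 /\ g1 1 = b1 /\ g2 1 = b2) /\
  (forall g1 g2 : R -> R,
     (forall s, continuity_pt g1 s) -> (forall s, continuity_pt g2 s) ->
     (forall s, 0 <= s <= 1 -> U (g1 s) (g2 s)) ->
     g1 0 = g1 1 -> g2 0 = g2 1 ->
     exists H1 H2 : R -> R -> R,
       (forall t s, continuity_2d_pt H1 t s) /\ (forall t s, continuity_2d_pt H2 t s) /\
       (forall t s, 0 <= t <= 1 -> 0 <= s <= 1 -> U (H1 t s) (H2 t s)) /\
       (forall s, 0 <= s <= 1 -> H1 0 s = g1 s /\ H2 0 s = g2 s) /\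
       (forall t, 0 <= t <= 1 -> H1 t 0 = H1 t 1 /\ H2 t 0 = H2 t 1) /\
       (forall s, 0 <= s <= 1 -> H1 1 s = H1 1 0 /\ H2 1 s = H2 1 0)).

Definition harmonic_on (U : R -> R -> Prop) (N : R -> R -> vec) : Prop :=
  forall x y, U x y -> cross (N x y) (vadd (Px (Px N) x y) (Py (Py N) x y)) = vzero.

Definition regular_at (g : R -> R -> vec) (x y : R) : Prop :=
  cross (Px g x y) (Py g x y) <> vzero.

Definition mean_curv (g N : R -> R -> vec) (x y : R) : R :=
  let E := dot (Px g x y) (Px g x y) in
  let F := dot (Px g x y) (Py g x y) in
  let G := dot (Py g x y) (Py g x y) in
  let l := dot (Px (Px g) x y) (N x y) in
  let m := dot (Px (Py g) x y) (N x y) in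
  let n := dot (Py (Py g) x y) (N x y) in
  (E * n - 2 * F * m + G * l) / (2 * (E * G - F ^ 2)).

(* Main.v *)
Require Import Defs.
From Stdlib Require Import Reals.
From Coquelicot Require Import Coquelicot.
From Stdlib Require Import Lra Lia List.
Require Import Defs.
Open Scope R_scope.

Lemma lagrange (a b : vec) : dot (cross a b) (cross a b) = dot a a * dot b b - dot a b ^ 2.
Proof. unfold dot, cross, vx, vy, vz, mkv; simpl; ring. Qed.

Lemma alg (t : R) (n u v A B C Dd : vec) :
  t * t = 1 -> dot n n = 1 -> dot n u = 0 -> dot n v = 0 ->
  dot u u + dot n A = 0 -> dot u v + dot n B = 0 -> dot v v + dot n Dd = 0 ->
  dot u u + dot v v + 2 * t * dot n (cross u v) <> 0 ->
  let gx := vadd (cross n v) (vscal (-t) u) in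
  let gy := vadd (vopp (cross n u)) (vscal (-t) v) in
  let gxx := vadd (vadd (cross u v) (cross n B)) (vscal (-t) A) in
  let gxy := vadd (vopp (vadd (cross u u) (cross n A))) (vscal (-t) B) in
  let gyy := vadd (vopp (vadd (cross v u) (cross n C))) (vscal (-t) Dd) in
  cross gx gy <> vzero /\ dot n gx = 0 /\ dot n gy = 0 /\
  (dot gx gx * dot gyy n - 2 * dot gx gy * dot gxy n + dot gy gy * dot gxx n) /
  (2 * (dot gx gx * dot gy gy - dot gx gy ^ 2)) = t / 2.
Proof.
  intros Ht Hnn Hnu Hnv HA HB HD HQ gx gy gxx gxy gyy.
  set (D := dot n (cross u v)) in *.
  set (Q := dot u u + dot v v + 2 * t * D) in *.
  assert (HE : dot gx gx = dot v v * dot n n - dot n v * dot n v + t * t * dot u u + 2 * t * D).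
  { unfold gx, D, dot, cross, vopp, vadd, vscal, vx, vy, vz, mkv; simpl; ring. }
  assert (HG : dot gy gy = dot u u * dot n n - dot n u * dot n u + t * t * dot v v + 2 * t * D).
  { unfold gy, D, dot, cross, vopp, vadd, vscal, vx, vy, vz, mkv; simpl; ring. }
  assert (HF : dot gx gy = - (dot n n * dot u v - dot n u * dot n v) + t * t * dot u v).
  { unfold gx, gy, dot, cross, vopp, vadd, vscal, vx, vy, vz, mkv; simpl; ring. }
  assert (Hl : dot gxx n = D - t * dot n A).
  { unfold gxx, D, dot, cross, vopp, vadd, vscal, vx, vy, vz, mkv; simpl; ring. }
  assert (Hm : dot gxy n = - t * dot n B).
  { unfold gxy, dot, cross, vopp, vadd, vscal, vx, vy, vz, mkv; simpl; ring. }
  assert (Hn : dot gyy n = D - t * dot n Dd).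
  { unfold gyy, D, dot, cross, vopp, vadd, vscal, vx, vy, vz, mkv; simpl; ring. }
  rewrite Hnn, Hnv, Ht in HE. rewrite Hnn, Hnu, Ht in HG. rewrite Hnn, Hnu, Hnv, Ht in HF.
  assert (E1 : dot gx gx = Q) by (unfold Q; lra).
  assert (E2 : dot gy gy = Q) by (unfold Q; lra).
  assert (E3 : dot gx gy = 0) by lra.
  split; [| split; [| split]].
  - intro Hc. assert (Hd := lagrange gx gy). rewrite Hc, E1, E2, E3 in Hd.
    unfold dot, vzero, mkv, vx, vy, vz in Hd; simpl in Hd.
    apply HQ. fold Q. nra.
  - replace (dot n gx) with (- t * dot n u) by (unfold gx, dot, cross, vopp, vadd, vscal, vx, vy, vz, mkv; simpl; ring).
    rewrite Hnu; ring.
  - replace (dot n gy) with (- t * dot n v) by (unfold gy, dot, cross, vopp, vadd, vscal, vx, vy, vz, mkv; simpl; ring).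
    rewrite Hnv; ring.
  - rewrite E1, E2, E3, Hl, Hn.
    assert (Hs : D - t * dot n Dd + (D - t * dot n A) = t * Q).
    { unfold Q. replace (dot n Dd) with (- dot v v) by lra. replace (dot n A) with (- dot u u) by lra.
      replace (t * (dot u u + dot v v + 2 * t * D)) with (t * (dot u u + dot v v) + 2 * (t * t) * D) by ring.
      rewrite Ht. ring. }
    fold Q in HQ.
    replace (Q * (D - t * dot n Dd) - 2 * 0 * (dot gxy n) + Q * (D - t * dot n A)) with (Q * (t * Q)) by (rewrite <- Hs; ring).
    field. exact HQ.
Qed.

Lemma open2_box (U : R -> R -> Prop) x y : open2 U -> U x y ->
  locally_2d (fun u v => U u v) x y.
Proof.
  intros HU Hxy. destruct (HU x y Hxy) as [eps He].
  assert (Hp : 0 < eps / 2) by (destruct eps; simpl; lra).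
  exists (mkposreal _ Hp). simpl. intros u v Hu Hv. apply He.
  apply Rabs_def2 in Hu. apply Rabs_def2 in Hv. destruct eps as [e He0]; cbn [dpart] in *.
  nra.
Qed.

Lemma open2_locx (U : R -> R -> Prop) x y : open2 U -> U x y -> locally x (fun t => U t y).
Proof.
  intros HU Hxy. destruct (open2_box U x y HU Hxy) as [d Hd].
  exists d. intros t Ht. apply Hd.
  - exact Ht.
  - rewrite Rminus_eq_0, Rabs_R0. apply cond_pos.
Qed.

Lemma open2_locy (U : R -> R -> Prop) x y : open2 U -> U x y -> locally y (fun t => U x t).
Proof.
  intros HU Hxy. destruct (open2_box U x y HU Hxy) as [d Hd].
  exists d. intros t Ht. apply Hd.
  - rewrite Rminus_eq_0, Rabs_R0. apply cond_pos.
  - exact Ht.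
Qed.

Lemma dpart_loc (U : R -> R -> Prop) (F G : R -> R -> R) : open2 U ->
  (forall x y, U x y -> F x y = G x y) ->
  forall ds x y, U x y -> dpart ds F x y = dpart ds G x y.
Proof.
  intros HU HFG ds. induction ds as [|b ds IH]; intros x y Hxy; cbn [dpart].
  - auto.
  - destruct b; unfold pdx, pdy; apply Derive_ext_loc.
    + apply filter_imp with (2 := open2_locx U x y HU Hxy). intros t Ht. auto.
    + apply filter_imp with (2 := open2_locy U x y HU Hxy). intros t Ht. auto.
Qed.

Definition SmAt (U : R -> R -> Prop) (h : R -> R -> R) (ds : list bool) : Prop :=
  forall x y, U x y ->
    ex_derive (fun t => dpart ds h t y) x /\
    ex_derive (fun t => dpart ds h x t) y /\
    continuity_2d_pt (dpart ds h) x y.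

Lemma SmAt_ext (U : R -> R -> Prop) (F G : R -> R -> R) ds : open2 U ->
  (forall x y, U x y -> F x y = G x y) -> SmAt U G ds -> SmAt U F ds.
Proof.
  intros HU HFG HG x y Hxy. destruct (HG x y Hxy) as [H1 [H2 H3]].
  split; [|split].
  - apply ex_derive_ext_loc with (2 := H1).
    apply filter_imp with (2 := open2_locx U x y HU Hxy). intros t Ht.
    symmetry. apply (dpart_loc U F G HU HFG ds t y Ht).
  - apply ex_derive_ext_loc with (2 := H2).
    apply filter_imp with (2 := open2_locy U x y HU Hxy). intros t Ht.
    symmetry. apply (dpart_loc U F G HU HFG ds x t Ht).
  - apply continuity_2d_pt_ext_loc with (2 := H3).
    destruct (open2_box U x y HU Hxy) as [d Hd]. exists d. intros u v Hu Hv.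
    symmetry. apply (dpart_loc U F G HU HFG ds u v). auto.
Qed.

Definition pdb (b : bool) := if b then pdx else pdy.

Lemma dpart_app ds b h : dpart (ds ++ b :: nil) h = dpart ds (pdb b h).
Proof. induction ds as [|a ds IH]; simpl. - destruct b; reflexivity. - rewrite IH; reflexivity. Qed.

Lemma SmAt_app U h ds b : SmAt U h (ds ++ b :: nil) <-> SmAt U (pdb b h) ds.
Proof. unfold SmAt. rewrite dpart_app. tauto. Qed.

Definition SmN U n h := forall ds, (length ds <= n)%nat -> SmAt U h ds.

Lemma SmN_pd U n h b : SmN U (S n) h -> SmN U n (pdb b h).
Proof.
  intros H ds Hl. apply (proj1 (SmAt_app U h ds b)). apply H. rewrite length_app. simpl. lia.
Qed.

Lemma SmN_le U n m h : (m <= n)%nat -> SmN U n h -> SmN U m h.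
Proof. intros Hmn H ds Hl. apply H. lia. Qed.

Lemma pdb_plus U f g b x y : SmAt U f nil -> SmAt U g nil -> U x y ->
  pdb b (fun x y => f x y + g x y) x y = pdb b f x y + pdb b g x y.
Proof.
  intros Hf Hg Hxy. destruct (Hf x y Hxy) as [f1 [f2 _]]. destruct (Hg x y Hxy) as [g1 [g2 _]].
  cbn [dpart] in *. destruct b; cbn [pdb]; unfold pdx, pdy; apply Derive_plus; auto.
Qed.

Lemma pdb_mult U f g b x y : SmAt U f nil -> SmAt U g nil -> U x y ->
  pdb b (fun x y => f x y * g x y) x y = pdb b f x y * g x y + f x y * pdb b g x y.
Proof.
  intros Hf Hg Hxy. destruct (Hf x y Hxy) as [f1 [f2 _]]. destruct (Hg x y Hxy) as [g1 [g2 _]].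
  cbn [dpart] in *. destruct b; cbn [pdb]; unfold pdx, pdy.
  - apply (Derive_mult (fun t => f t y) (fun t => g t y) x); auto.
  - apply (Derive_mult (fun t => f x t) (fun t => g x t) y); auto.
Qed.

Lemma SmAt_nil_plus U f g : SmAt U f nil -> SmAt U g nil -> SmAt U (fun x y => f x y + g x y) nil.
Proof.
  intros Hf Hg x y Hxy. destruct (Hf x y Hxy) as [f1 [f2 f3]]. destruct (Hg x y Hxy) as [g1 [g2 g3]].
  cbn [dpart] in *. split; [|split].
  - exact (ex_derive_plus (fun t => f t y) (fun t => g t y) x f1 g1).
  - exact (ex_derive_plus (fun t => f x t) (fun t => g x t) y f2 g2).
  - apply continuity_2d_pt_plus; auto.
Qed.

Lemma SmAt_nil_mult U f g : SmAt U f nil -> SmAt U g nil -> SmAt U (fun x y => f x y * g x y) nil.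
Proof.
  intros Hf Hg x y Hxy. destruct (Hf x y Hxy) as [f1 [f2 f3]]. destruct (Hg x y Hxy) as [g1 [g2 g3]].
  cbn [dpart] in *. split; [|split].
  - exact (ex_derive_mult (fun t => f t y) (fun t => g t y) x f1 g1).
  - exact (ex_derive_mult (fun t => f x t) (fun t => g x t) y f2 g2).
  - apply continuity_2d_pt_mult; auto.
Qed.

Lemma SmN_plus U : open2 U -> forall n f g, SmN U n f -> SmN U n g ->
  SmN U n (fun x y => f x y + g x y).
Proof.
  intros HU n. induction n as [|n IH]; intros f g Hf Hg ds Hl;
  induction ds as [|b ds _] using rev_ind.
  - apply SmAt_nil_plus; [apply Hf|apply Hg]; simpl; lia.
  - rewrite length_app in Hl; simpl in Hl; lia.
  - apply SmAt_nil_plus; [apply Hf|apply Hg]; simpl; lia.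
  - rewrite length_app in Hl; simpl in Hl.
    apply (proj2 (SmAt_app _ _ ds b)).
    apply SmAt_ext with (G := fun x y => pdb b f x y + pdb b g x y); auto.
    + intros x y Hxy. apply (pdb_plus U); auto; [apply Hf|apply Hg]; simpl; lia.
    + apply (IH (pdb b f) (pdb b g)); try (apply SmN_pd; auto). lia.
Qed.

Lemma SmN_mult U : open2 U -> forall n f g, SmN U n f -> SmN U n g ->
  SmN U n (fun x y => f x y * g x y).
Proof.
  intros HU n. induction n as [|n IH]; intros f g Hf Hg ds Hl;
  induction ds as [|b ds _] using rev_ind.
  - apply SmAt_nil_mult; [apply Hf|apply Hg]; simpl; lia.
  - rewrite length_app in Hl; simpl in Hl; lia.
  - apply SmAt_nil_mult; [apply Hf|apply Hg]; simpl; lia.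
  - rewrite length_app in Hl; simpl in Hl.
    apply (proj2 (SmAt_app _ _ ds b)).
    apply SmAt_ext with (G := fun x y => pdb b f x y * g x y + f x y * pdb b g x y); auto.
    + intros x y Hxy. apply (pdb_mult U); auto; [apply Hf|apply Hg]; simpl; lia.
    + apply (SmN_plus U HU n (fun x y => pdb b f x y * g x y) (fun x y => f x y * pdb b g x y)).
      * apply (IH (pdb b f) g). apply SmN_pd; auto. apply SmN_le with (S n); auto.
      * apply (IH f (pdb b g)). apply SmN_le with (S n); auto. apply SmN_pd; auto.
      * lia.
Qed.

Lemma smooth_SmN U h : smooth_scalar U h <-> forall n, SmN U n h.
Proof.
  split.
  - intros H n ds _ x y Hxy. apply H; auto.
  - intros H ds x y Hxy. apply (H (length ds) ds (le_n _) x y Hxy).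
Qed.

Lemma sm_plus U f g : open2 U -> smooth_scalar U f -> smooth_scalar U g ->
  smooth_scalar U (fun x y => f x y + g x y).
Proof.
  intros HU Hf Hg. apply smooth_SmN. intro n. apply SmN_plus; auto; apply smooth_SmN; auto.
Qed.

Lemma sm_mult U f g : open2 U -> smooth_scalar U f -> smooth_scalar U g ->
  smooth_scalar U (fun x y => f x y * g x y).
Proof.
  intros HU Hf Hg. apply smooth_SmN. intro n. apply SmN_mult; auto; apply smooth_SmN; auto.
Qed.

Lemma dpart_const c ds : exists k, forall x y, dpart ds (fun _ _ => c) x y = k.
Proof.
  induction ds as [|b ds [k Hk]]; cbn [dpart].
  - exists c; auto.
  - exists 0. intros x y. destruct b; unfold pdx, pdy.
    + rewrite (Derive_ext _ (fun _ => k)) by auto. apply Derive_const.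
    + rewrite (Derive_ext _ (fun _ => k)) by auto. apply Derive_const.
Qed.

Lemma sm_const U c : smooth_scalar U (fun _ _ => c).
Proof.
  intros ds x y _. destruct (dpart_const c ds) as [k Hk]. split; [|split].
  - apply ex_derive_ext with (fun _ => k). intros; auto. apply ex_derive_const.
  - apply ex_derive_ext with (fun _ => k). intros; auto. apply ex_derive_const.
  - apply continuity_2d_pt_ext with (fun _ _ => k). intros; auto. apply continuity_2d_pt_const.
Qed.

Lemma sm_ext U F G : open2 U -> (forall x y, U x y -> F x y = G x y) ->
  smooth_scalar U G -> smooth_scalar U F.
Proof.
  intros HU HFG HG. apply smooth_SmN. intros n ds _. apply SmAt_ext with G; auto.
  intros x y Hxy. apply HG; auto.
Qed.

Lemma sm_pd U h b : smooth_scalar U h -> smooth_scalar U (pdb b h).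
Proof.
  intros H. apply smooth_SmN. intros n ds _. apply (proj1 (SmAt_app U h ds b)). intros x y Hxy. apply H; auto.
Qed.

Lemma sm_from_pd U F h1 h2 : open2 U -> SmAt U F nil ->
  (forall x y, U x y -> pdx F x y = h1 x y) ->
  (forall x y, U x y -> pdy F x y = h2 x y) ->
  smooth_scalar U h1 -> smooth_scalar U h2 -> smooth_scalar U F.
Proof.
  intros HU H0 E1 E2 S1 S2. apply smooth_SmN. intros n ds _.
  induction ds as [|b ds _] using rev_ind; auto.
  apply (proj2 (SmAt_app U F ds b)). destruct b; cbn [pdb].
  - apply SmAt_ext with h1; auto. intros x y Hxy; apply S1; auto.
  - apply SmAt_ext with h2; auto. intros x y Hxy; apply S2; auto.
Qed.

Lemma ex_derive_loc_cont (f : R -> R) x (eps : posreal) : ex_derive f x ->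
  exists d : posreal, forall t, Rabs (t - x) < d -> Rabs (f t - f x) < eps.
Proof.
  intros H. apply ex_derive_continuous in H.
  assert (Hl := H (ball (f x) eps) (locally_ball _ eps)).
  destruct Hl as [d Hd]. exists d. intros t Ht. apply (Hd t Ht).
Qed.

Lemma C1_cont (U : R -> R -> Prop) F x y : open2 U -> U x y ->
  (forall u v, U u v -> ex_derive (fun t => F t v) u) ->
  ex_derive (fun t => F x t) y ->
  continuity_2d_pt (pdx F) x y -> continuity_2d_pt F x y.
Proof.
  intros HU Hxy Hdx Hdy Hc eps.
  destruct (open2_box U x y HU Hxy) as [d0 Hd0].
  assert (H1 : 0 < 1) by lra.
  destruct (Hc (mkposreal 1 H1)) as [d1 Hd1]. simpl in Hd1.
  set (M := Rabs (pdx F x y) + 1).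
  assert (HM : 0 < M) by (unfold M; assert (0 <= Rabs (pdx F x y)) by apply Rabs_pos; lra).
  assert (He2 : 0 < eps / 2) by (destruct eps; simpl; lra).
  destruct (ex_derive_loc_cont (fun t => F x t) y (mkposreal _ He2) Hdy) as [d2 Hd2].
  simpl in Hd2.
  assert (He3 : 0 < eps / (2 * M)).
  { apply Rdiv_lt_0_compat. destruct eps; simpl; lra. lra. }
  set (d := Rmin (Rmin d0 d1) (Rmin d2 (eps / (2 * M)))).
  assert (Hd : 0 < d).
  { unfold d. repeat apply Rmin_pos; try apply cond_pos; auto. }
  exists (mkposreal d Hd). simpl. intros u v Hu Hv.
  assert (Hdd0 : d <= d0).
  { unfold d. apply Rle_trans with (1 := Rmin_l _ _). apply Rmin_l. }
  assert (Hdd1 : d <= d1).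
  { unfold d. apply Rle_trans with (1 := Rmin_l _ _). apply Rmin_r. }
  assert (Hdd2 : d <= d2).
  { unfold d. apply Rle_trans with (1 := Rmin_r _ _). apply Rmin_l. }
  assert (Hdd3 : d <= eps / (2 * M)).
  { unfold d. apply Rle_trans with (1 := Rmin_r _ _). apply Rmin_r. }
  assert (Hseg : forall s, Rmin x u <= s <= Rmax x u -> Rabs (s - x) <= Rabs (u - x)).
  { intros s Hs. unfold Rmin, Rmax in Hs. destruct (Rle_dec x u);
    unfold Rabs; repeat destruct Rcase_abs; lra. }
  destruct (MVT_gen (fun s => F s v) x u (fun s => pdx F s v)) as [c [Hc1 Hc2]].
  - intros s Hs. unfold pdx. apply Derive_correct. apply Hdx. apply Hd0; [|lra].
    assert (Rabs (s - x) <= Rabs (u - x)) by (apply Hseg; lra). lra.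
  - intros s Hs. apply continuity_pt_filterlim. refine (ex_derive_continuous (fun t => F t v) s _).
    apply Hdx. apply Hd0; [|lra].
    assert (Rabs (s - x) <= Rabs (u - x)) by (apply Hseg; lra). lra.
  - assert (Hcx : Rabs (c - x) <= Rabs (u - x)) by (apply Hseg; lra).
    assert (Hbd : Rabs (pdx F c v) <= M).
    { assert (Hq := Hd1 c v ltac:(lra) ltac:(lra)).
      unfold M. assert (Hr := Rabs_triang_inv (pdx F c v) (pdx F x y)). lra. }
    assert (Hfirst : Rabs (F u v - F x v) <= M * Rabs (u - x)).
    { rewrite Hc2, Rabs_mult. apply Rmult_le_compat_r; auto. apply Rabs_pos. }
    assert (Hux : M * Rabs (u - x) < eps / 2).
    { apply Rlt_le_trans with (M * (eps / (2 * M))).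
      apply Rmult_lt_compat_l; lra.
      right. field. lra. }
    assert (Hsecond := Hd2 v ltac:(lra)).
    replace (F u v - F x y) with ((F u v - F x v) + (F x v - F x y)) by ring.
    apply Rle_lt_trans with (1 := Rabs_triang _ _). lra.
Qed.

Lemma vec_eq3 (v w : vec) : vx v = vx w -> vy v = vy w -> vz v = vz w -> v = w.
Proof. destruct v as [[a b] c], w as [[a' b'] c']. unfold vx, vy, vz; simpl. intros; subst; auto. Qed.

Lemma exd_cross1 (a2 a3 b2 b3 : R -> R) x :
  ex_derive a2 x -> ex_derive a3 x -> ex_derive b2 x -> ex_derive b3 x ->
  ex_derive (fun s => a2 s * b3 s - a3 s * b2 s) x.
Proof.
  intros H1 H2 H3 H4.
  exact (ex_derive_minus (fun s => a2 s * b3 s) (fun s => a3 s * b2 s) x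
    (ex_derive_mult _ _ x H1 H4) (ex_derive_mult _ _ x H2 H3)).
Qed.

Lemma D_cross1 (a2 a3 b2 b3 : R -> R) x :
  ex_derive a2 x -> ex_derive a3 x -> ex_derive b2 x -> ex_derive b3 x ->
  Derive (fun s => a2 s * b3 s - a3 s * b2 s) x =
  (Derive a2 x * b3 x - Derive a3 x * b2 x) + (a2 x * Derive b3 x - a3 x * Derive b2 x).
Proof.
  intros H1 H2 H3 H4.
  transitivity (Derive (fun s => a2 s * b3 s) x - Derive (fun s => a3 s * b2 s) x).
  { exact (Derive_minus (fun s => a2 s * b3 s) (fun s => a3 s * b2 s) x
    (ex_derive_mult _ _ x H1 H4) (ex_derive_mult _ _ x H2 H3)). }
  rewrite (Derive_mult a2 b3 x H1 H4), (Derive_mult a3 b2 x H2 H3). ring.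
Qed.

Lemma exd_plus (a b : R -> R) x : ex_derive a x -> ex_derive b x -> ex_derive (fun s => a s + b s) x.
Proof. intros H1 H2. exact (ex_derive_plus a b x H1 H2). Qed.

Lemma D_plus (a b : R -> R) x : ex_derive a x -> ex_derive b x ->
  Derive (fun s => a s + b s) x = Derive a x + Derive b x.
Proof. intros H1 H2. exact (Derive_plus a b x H1 H2). Qed.

Definition exdx (F : R -> R -> vec) x y :=
  ex_derive (fun s => c1 F s y) x /\ ex_derive (fun s => c2 F s y) x /\ ex_derive (fun s => c3 F s y) x.
Definition exdy (F : R -> R -> vec) x y :=
  ex_derive (fun s => c1 F x s) y /\ ex_derive (fun s => c2 F x s) y /\ ex_derive (fun s => c3 F x s) y.

Section V.
Variables (A B : R -> R -> vec) (x y : R).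

Lemma exdx_vadd : exdx A x y -> exdx B x y -> exdx (fun x y => vadd (A x y) (B x y)) x y.
Proof.
  intros [a1 [a2 a3]] [b1 [b2 b3]]. split; [|split].
  exact (exd_plus _ _ x a1 b1). exact (exd_plus _ _ x a2 b2). exact (exd_plus _ _ x a3 b3).
Qed.
Lemma exdy_vadd : exdy A x y -> exdy B x y -> exdy (fun x y => vadd (A x y) (B x y)) x y.
Proof.
  intros [a1 [a2 a3]] [b1 [b2 b3]]. split; [|split].
  exact (exd_plus _ _ y a1 b1). exact (exd_plus _ _ y a2 b2). exact (exd_plus _ _ y a3 b3).
Qed.
Lemma exdx_vscal c : exdx A x y -> exdx (fun x y => vscal c (A x y)) x y.
Proof.
  intros [a1 [a2 a3]]. split; [|split].
  exact (ex_derive_scal _ c x a1). exact (ex_derive_scal _ c x a2). exact (ex_derive_scal _ c x a3).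
Qed.
Lemma exdy_vscal c : exdy A x y -> exdy (fun x y => vscal c (A x y)) x y.
Proof.
  intros [a1 [a2 a3]]. split; [|split].
  exact (ex_derive_scal _ c y a1). exact (ex_derive_scal _ c y a2). exact (ex_derive_scal _ c y a3).
Qed.
Lemma exdx_cross : exdx A x y -> exdx B x y -> exdx (fun x y => cross (A x y) (B x y)) x y.
Proof.
  intros [a1 [a2 a3]] [b1 [b2 b3]]. split; [|split].
  exact (exd_cross1 _ _ _ _ x a2 a3 b2 b3).
  exact (exd_cross1 _ _ _ _ x a3 a1 b3 b1).
  exact (exd_cross1 _ _ _ _ x a1 a2 b1 b2).
Qed.
Lemma exdy_cross : exdy A x y -> exdy B x y -> exdy (fun x y => cross (A x y) (B x y)) x y.
Proof.
  intros [a1 [a2 a3]] [b1 [b2 b3]]. split; [|split].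
  exact (exd_cross1 _ _ _ _ y a2 a3 b2 b3).
  exact (exd_cross1 _ _ _ _ y a3 a1 b3 b1).
  exact (exd_cross1 _ _ _ _ y a1 a2 b1 b2).
Qed.

Lemma Px_vadd : exdx A x y -> exdx B x y ->
  Px (fun x y => vadd (A x y) (B x y)) x y = vadd (Px A x y) (Px B x y).
Proof.
  intros [a1 [a2 a3]] [b1 [b2 b3]]. apply vec_eq3.
  exact (D_plus _ _ x a1 b1). exact (D_plus _ _ x a2 b2). exact (D_plus _ _ x a3 b3).
Qed.
Lemma Py_vadd : exdy A x y -> exdy B x y ->
  Py (fun x y => vadd (A x y) (B x y)) x y = vadd (Py A x y) (Py B x y).
Proof.
  intros [a1 [a2 a3]] [b1 [b2 b3]]. apply vec_eq3.
  exact (D_plus _ _ y a1 b1). exact (D_plus _ _ y a2 b2). exact (D_plus _ _ y a3 b3).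
Qed.
Lemma Px_vscal c : Px (fun x y => vscal c (A x y)) x y = vscal c (Px A x y).
Proof.
  apply vec_eq3.
  exact (Derive_scal (fun s => c1 A s y) c x).
  exact (Derive_scal (fun s => c2 A s y) c x).
  exact (Derive_scal (fun s => c3 A s y) c x).
Qed.
Lemma Py_vscal c : Py (fun x y => vscal c (A x y)) x y = vscal c (Py A x y).
Proof.
  apply vec_eq3.
  exact (Derive_scal (fun s => c1 A x s) c y).
  exact (Derive_scal (fun s => c2 A x s) c y).
  exact (Derive_scal (fun s => c3 A x s) c y).
Qed.
Lemma Px_cross : exdx A x y -> exdx B x y ->
  Px (fun x y => cross (A x y) (B x y)) x y =
  vadd (cross (Px A x y) (B x y)) (cross (A x y) (Px B x y)).
Proof.
  intros [a1 [a2 a3]] [b1 [b2 b3]]. apply vec_eq3.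
  exact (D_cross1 _ _ _ _ x a2 a3 b2 b3).
  exact (D_cross1 _ _ _ _ x a3 a1 b3 b1).
  exact (D_cross1 _ _ _ _ x a1 a2 b1 b2).
Qed.
Lemma Py_cross : exdy A x y -> exdy B x y ->
  Py (fun x y => cross (A x y) (B x y)) x y =
  vadd (cross (Py A x y) (B x y)) (cross (A x y) (Py B x y)).
Proof.
  intros [a1 [a2 a3]] [b1 [b2 b3]]. apply vec_eq3.
  exact (D_cross1 _ _ _ _ y a2 a3 b2 b3).
  exact (D_cross1 _ _ _ _ y a3 a1 b3 b1).
  exact (D_cross1 _ _ _ _ y a1 a2 b1 b2).
Qed.
End V.

Lemma Px_ext_loc (U : R -> R -> Prop) (F G : R -> R -> vec) x y : open2 U -> U x y ->
  (forall x y, U x y -> F x y = G x y) -> Px F x y = Px G x y.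
Proof.
  intros HU Hxy HFG. apply vec_eq3; simpl; unfold pdx; apply Derive_ext_loc;
  apply filter_imp with (2 := open2_locx U x y HU Hxy); intros s Hs; unfold c1, c2, c3; rewrite HFG; auto.
Qed.
Lemma Py_ext_loc (U : R -> R -> Prop) (F G : R -> R -> vec) x y : open2 U -> U x y ->
  (forall x y, U x y -> F x y = G x y) -> Py F x y = Py G x y.
Proof.
  intros HU Hxy HFG. apply vec_eq3; simpl; unfold pdy; apply Derive_ext_loc;
  apply filter_imp with (2 := open2_locy U x y HU Hxy); intros s Hs; unfold c1, c2, c3; rewrite HFG; auto.
Qed.

Lemma Px_has F x y v : has_px F x y v -> Px F x y = v.
Proof.
  intros [h1 [h2 h3]]. apply vec_eq3.
  exact (is_derive_unique _ _ _ h1). exact (is_derive_unique _ _ _ h2). exact (is_derive_unique _ _ _ h3).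
Qed.
Lemma Py_has F x y v : has_py F x y v -> Py F x y = v.
Proof.
  intros [h1 [h2 h3]]. apply vec_eq3.
  exact (is_derive_unique _ _ _ h1). exact (is_derive_unique _ _ _ h2). exact (is_derive_unique _ _ _ h3).
Qed.
Lemma exdx_has F x y v : has_px F x y v -> exdx F x y.
Proof. intros [h1 [h2 h3]]. split; [|split]; eexists; eauto. Qed.
Lemma exdy_has F x y v : has_py F x y v -> exdy F x y.
Proof. intros [h1 [h2 h3]]. split; [|split]; eexists; eauto. Qed.

Lemma sm_isdx U h x y ds : smooth_scalar U h -> U x y ->
  is_derive (fun s => dpart ds h s y) x (pdx (dpart ds h) x y).
Proof. intros H Hxy. apply Derive_correct. apply (H ds x y Hxy). Qed.
Lemma sm_isdy U h x y ds : smooth_scalar U h -> U x y ->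
  is_derive (fun s => dpart ds h x s) y (pdy (dpart ds h) x y).
Proof. intros H Hxy. apply Derive_correct. apply (H ds x y Hxy). Qed.

Lemma isd_dot (a1 a2 a3 b1 b2 b3 : R -> R) x da1 da2 da3 db1 db2 db3 :
  is_derive a1 x da1 -> is_derive a2 x da2 -> is_derive a3 x da3 ->
  is_derive b1 x db1 -> is_derive b2 x db2 -> is_derive b3 x db3 ->
  is_derive (fun s => a1 s * b1 s + a2 s * b2 s + a3 s * b3 s) x
    (da1 * b1 x + a1 x * db1 + (da2 * b2 x + a2 x * db2) + (da3 * b3 x + a3 x * db3)).
Proof.
  intros H1 H2 H3 H4 H5 H6.
  exact (is_derive_plus _ _ x _ _
    (is_derive_plus _ _ x _ _ (is_derive_mult _ _ x _ _ H1 H4 Rmult_comm)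
                              (is_derive_mult _ _ x _ _ H2 H5 Rmult_comm))
    (is_derive_mult _ _ x _ _ H3 H6 Rmult_comm)).
Qed.

Lemma isd_locconst (h : R -> R) x c l : locally x (fun s => h s = c) -> is_derive h x l -> l = 0.
Proof.
  intros Hl Hd.
  assert (H0 : is_derive h x 0).
  { apply is_derive_ext_loc with (fun _ => c).
    - apply filter_imp with (2 := Hl). intros s Hs. auto.
    - exact (is_derive_const c x). }
  rewrite <- (is_derive_unique _ _ _ Hd). apply (is_derive_unique _ _ _ H0).
Qed.

Lemma orth_deriv U (a1 a2 a3 b1 b2 b3 : R -> R -> R) c : open2 U ->
  smooth_scalar U a1 -> smooth_scalar U a2 -> smooth_scalar U a3 ->
  smooth_scalar U b1 -> smooth_scalar U b2 -> smooth_scalar U b3 ->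
  (forall x y, U x y -> a1 x y * b1 x y + a2 x y * b2 x y + a3 x y * b3 x y = c) ->
  forall x y, U x y ->
  pdx a1 x y * b1 x y + a1 x y * pdx b1 x y + (pdx a2 x y * b2 x y + a2 x y * pdx b2 x y)
    + (pdx a3 x y * b3 x y + a3 x y * pdx b3 x y) = 0 /\
  pdy a1 x y * b1 x y + a1 x y * pdy b1 x y + (pdy a2 x y * b2 x y + a2 x y * pdy b2 x y)
    + (pdy a3 x y * b3 x y + a3 x y * pdy b3 x y) = 0.
Proof.
  intros HU S1 S2 S3 T1 T2 T3 Hc x y Hxy. split.
  - apply (isd_locconst (fun s => a1 s y * b1 s y + a2 s y * b2 s y + a3 s y * b3 s y) x c).
    + apply filter_imp with (2 := open2_locx U x y HU Hxy). intros s Hs. auto.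
    + apply (isd_dot (fun s => a1 s y) (fun s => a2 s y) (fun s => a3 s y) (fun s => b1 s y) (fun s => b2 s y) (fun s => b3 s y) x);
        first [exact (sm_isdx _ _ x y nil S1 Hxy) | exact (sm_isdx _ _ x y nil S2 Hxy) | exact (sm_isdx _ _ x y nil S3 Hxy) | exact (sm_isdx _ _ x y nil T1 Hxy) | exact (sm_isdx _ _ x y nil T2 Hxy) | exact (sm_isdx _ _ x y nil T3 Hxy)].
  - apply (isd_locconst (fun s => a1 x s * b1 x s + a2 x s * b2 x s + a3 x s * b3 x s) y c).
    + apply filter_imp with (2 := open2_locy U x y HU Hxy). intros s Hs. auto.
    + apply (isd_dot (fun s => a1 x s) (fun s => a2 x s) (fun s => a3 x s) (fun s => b1 x s) (fun s => b2 x s) (fun s => b3 x s) y);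
        first [exact (sm_isdy _ _ x y nil S1 Hxy) | exact (sm_isdy _ _ x y nil S2 Hxy) | exact (sm_isdy _ _ x y nil S3 Hxy) | exact (sm_isdy _ _ x y nil T1 Hxy) | exact (sm_isdy _ _ x y nil T2 Hxy) | exact (sm_isdy _ _ x y nil T3 Hxy)].
Qed.

Lemma sm_minus U f g : open2 U -> smooth_scalar U f -> smooth_scalar U g ->
  smooth_scalar U (fun x y => f x y - g x y).
Proof.
  intros HU Hf Hg. apply sm_ext with (G := fun x y => f x y + (fun _ _ => -1) x y * g x y); auto.
  - intros; ring.
  - apply sm_plus; auto. apply sm_mult; auto. apply sm_const.
Qed.

Lemma sm_sub U V h : (forall x y, U x y -> V x y) -> smooth_scalar V h -> smooth_scalar U h.
Proof. intros HUV H ds x y Hxy. apply H; auto. Qed.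

Lemma sm_fcomp U F h1 h2 : open2 U -> smooth_scalar U h1 -> smooth_scalar U h2 ->
  (forall x y, U x y -> is_derive (fun s => F s y) x (h1 x y) /\ is_derive (fun s => F x s) y (h2 x y)) ->
  smooth_scalar U F.
Proof.
  intros HU S1 S2 HD.
  assert (E1 : forall x y, U x y -> pdx F x y = h1 x y).
  { intros x y Hxy. apply is_derive_unique. exact (proj1 (HD x y Hxy)). }
  assert (E2 : forall x y, U x y -> pdy F x y = h2 x y).
  { intros x y Hxy. apply is_derive_unique. exact (proj2 (HD x y Hxy)). }
  apply (sm_from_pd U F h1 h2); auto.
  intros x y Hxy. cbn [dpart]. split; [|split].
  - exists (h1 x y); exact (proj1 (HD x y Hxy)).
  - exists (h2 x y); exact (proj2 (HD x y Hxy)).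
  - apply (C1_cont U F x y HU Hxy).
    + intros u v Huv. exists (h1 u v); exact (proj1 (HD u v Huv)).
    + exists (h2 x y); exact (proj2 (HD x y Hxy)).
    + apply continuity_2d_pt_ext_loc with h1.
      * destruct (open2_box U x y HU Hxy) as [d Hd]. exists d. intros u v Hu Hv.
        symmetry. apply E1. auto.
      * exact (proj2 (proj2 (S1 nil x y Hxy))).
Qed.

Lemma cont_poly (n1 n2 n3 u1 u2 u3 v1 v2 v3 : R -> R -> R) t x y :
  continuity_2d_pt n1 x y -> continuity_2d_pt n2 x y -> continuity_2d_pt n3 x y ->
  continuity_2d_pt u1 x y -> continuity_2d_pt u2 x y -> continuity_2d_pt u3 x y ->
  continuity_2d_pt v1 x y -> continuity_2d_pt v2 x y -> continuity_2d_pt v3 x y ->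
  continuity_2d_pt (fun x y =>
    u1 x y * u1 x y + u2 x y * u2 x y + u3 x y * u3 x y +
    (v1 x y * v1 x y + v2 x y * v2 x y + v3 x y * v3 x y) +
    2 * t * (n1 x y * (u2 x y * v3 x y - u3 x y * v2 x y) +
             n2 x y * (u3 x y * v1 x y - u1 x y * v3 x y) +
             n3 x y * (u1 x y * v2 x y - u2 x y * v1 x y))) x y.
Proof.
  intros.
  repeat (apply continuity_2d_pt_plus || apply continuity_2d_pt_minus ||
          apply continuity_2d_pt_mult || apply continuity_2d_pt_const || apply continuity_2d_pt_opp || assumption).
Qed.

Definition Qf (N : R -> R -> vec) (t x y : R) : R :=
  dot (Px N x y) (Px N x y) + dot (Py N x y) (Py N x y) +
  2 * t * dot (N x y) (cross (Px N x y) (Py N x y)).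

Lemma dot_pos (v : vec) : v <> vzero -> 0 < dot v v.
Proof.
  intros Hv. destruct v as [[a b] c]. unfold dot, vx, vy, vz; simpl.
  destruct (Rlt_dec 0 (a * a + b * b + c * c)) as [H|H]; auto.
  exfalso. apply Hv. assert (a = 0) by nra. assert (b = 0) by nra. assert (c = 0) by nra.
  subst. reflexivity.
Qed.

Lemma open2_of_loc (U : R -> R -> Prop) : (forall x y, U x y -> locally_2d U x y) -> open2 U.
Proof.
  intros H x y Hxy. destruct (H x y Hxy) as [d Hd]. exists d. intros u v Huv.
  apply Hd.
  - destruct (Rlt_dec (Rabs (u - x)) d) as [h|h]; auto. exfalso.
    assert (Rabs (u - x) ^ 2 = (u - x) ^ 2) by apply pow2_abs.
    destruct d as [d dp]; simpl in *. apply Rnot_lt_le in h.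
    assert (d * d <= Rabs (u - x) * Rabs (u - x)) by (apply Rmult_le_compat; lra).
    assert (0 <= (v - y) ^ 2) by apply pow2_ge_0. nra.
  - destruct (Rlt_dec (Rabs (v - y)) d) as [h|h]; auto. exfalso.
    assert (Rabs (v - y) ^ 2 = (v - y) ^ 2) by apply pow2_abs.
    destruct d as [d dp]; simpl in *. apply Rnot_lt_le in h.
    assert (d * d <= Rabs (v - y) * Rabs (v - y)) by (apply Rmult_le_compat; lra).
    assert (0 <= (u - x) ^ 2) by apply pow2_ge_0. nra.
Qed.

Lemma loc2d_and (P Q : R -> R -> Prop) x y : locally_2d P x y -> locally_2d Q x y ->
  locally_2d (fun u v => P u v /\ Q u v) x y.
Proof.
  intros [d1 H1] [d2 H2].
  assert (Hp : 0 < Rmin d1 d2) by (apply Rmin_pos; apply cond_pos).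
  exists (mkposreal _ Hp). simpl. intros u v Hu Hv.
  assert (Rmin d1 d2 <= d1) by apply Rmin_l. assert (Rmin d1 d2 <= d2) by apply Rmin_r.
  split; [apply H1|apply H2]; lra.
Qed.

Lemma Px_vopp (A : R -> R -> vec) x y : Px (fun x y => vopp (A x y)) x y = vopp (Px A x y).
Proof. exact (Px_vscal A x y (-1)). Qed.
Lemma Py_vopp (A : R -> R -> vec) x y : Py (fun x y => vopp (A x y)) x y = vopp (Py A x y).
Proof. exact (Py_vscal A x y (-1)). Qed.
Lemma exdx_vopp (A : R -> R -> vec) x y : exdx A x y -> exdx (fun x y => vopp (A x y)) x y.
Proof. exact (exdx_vscal A x y (-1)). Qed.
Lemma exdy_vopp (A : R -> R -> vec) x y : exdy A x y -> exdy (fun x y => vopp (A x y)) x y.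
Proof. exact (exdy_vscal A x y (-1)). Qed.

Theorem proposition2p2 (Om : R -> R -> Prop) (N f : R -> R -> vec) (p1 p2 : R) :
  open2 Om -> simply_connected Om ->
  smooth Om N ->
  (forall x y, Om x y -> dot (N x y) (N x y) = 1) ->
  harmonic_on Om N ->
  (forall x y, Om x y ->
     has_px f x y (cross (N x y) (Py N x y)) /\
     has_py f x y (vopp (cross (N x y) (Px N x y)))) ->
  Om p1 p2 ->
  (Px N p1 p2 <> vzero \/ Py N p1 p2 <> vzero) ->
  exists U : R -> R -> Prop,
    open2 U /\ U p1 p2 /\ (forall x y, U x y -> Om x y) /\
    exists g : R -> R -> vec,
      smooth U g /\
      (forall x y, U x y ->
         regular_at g x y /\
         dot (N x y) (Px g x y) = 0 /\ dot (N x y) (Py g x y) = 0) /\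
      (exists H0 : R, forall x y, U x y -> mean_curv g N x y = H0) /\
      (exists t : R, forall x y, U x y -> f x y = vadd (g x y) (vscal t (N x y))).
Proof.
  intros HOm _ HN Hunit _ Hf Hp Hrank.
  destruct HN as [SN1 [SN2 SN3]].
  assert (SX1 := sm_pd Om (c1 N) true SN1). assert (SX2 := sm_pd Om (c2 N) true SN2).
  assert (SX3 := sm_pd Om (c3 N) true SN3).
  assert (SY1 := sm_pd Om (c1 N) false SN1). assert (SY2 := sm_pd Om (c2 N) false SN2).
  assert (SY3 := sm_pd Om (c3 N) false SN3).
  cbn [pdb] in SX1, SX2, SX3, SY1, SY2, SY3.
  assert (exN : forall x y, Om x y ->
    exdx N x y /\ exdy N x y /\ exdx (Px N) x y /\ exdy (Px N) x y /\ exdx (Py N) x y /\ exdy (Py N) x y).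
  { intros x y H.
    destruct (SN1 nil x y H) as [a1 [b1 _]]. destruct (SN2 nil x y H) as [a2 [b2 _]].
    destruct (SN3 nil x y H) as [a3 [b3 _]].
    destruct (SX1 nil x y H) as [c1' [d1 _]]. destruct (SX2 nil x y H) as [c2' [d2 _]].
    destruct (SX3 nil x y H) as [c3' [d3 _]].
    destruct (SY1 nil x y H) as [e1 [f1 _]]. destruct (SY2 nil x y H) as [e2 [f2 _]].
    destruct (SY3 nil x y H) as [e3 [f3 _]].
    repeat split; assumption. }
  assert (Hnu : forall x y, Om x y -> dot (N x y) (Px N x y) = 0 /\ dot (N x y) (Py N x y) = 0).
  { intros x y H.
    destruct (orth_deriv Om (c1 N) (c2 N) (c3 N) (c1 N) (c2 N) (c3 N) 1 HOm SN1 SN2 SN3 SN1 SN2 SN3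
      (fun x y H => Hunit x y H) x y H) as [E1 E2].
    split.
    - change (c1 N x y * pdx (c1 N) x y + c2 N x y * pdx (c2 N) x y + c3 N x y * pdx (c3 N) x y = 0). lra.
    - change (c1 N x y * pdy (c1 N) x y + c2 N x y * pdy (c2 N) x y + c3 N x y * pdy (c3 N) x y = 0). lra. }
  assert (H2x : forall x y, Om x y ->
    dot (Px N x y) (Px N x y) + dot (N x y) (Px (Px N) x y) = 0).
  { intros x y H.
    destruct (orth_deriv Om (c1 N) (c2 N) (c3 N) (pdx (c1 N)) (pdx (c2 N)) (pdx (c3 N)) 0 HOm SN1 SN2 SN3 SX1 SX2 SX3
      (fun x y H => proj1 (Hnu x y H)) x y H) as [E1 E2].
    change (pdx (c1 N) x y * pdx (c1 N) x y + pdx (c2 N) x y * pdx (c2 N) x y + pdx (c3 N) x y * pdx (c3 N) x y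
      + (c1 N x y * pdx (pdx (c1 N)) x y + c2 N x y * pdx (pdx (c2 N)) x y + c3 N x y * pdx (pdx (c3 N)) x y) = 0).
    lra. }
  assert (H2y : forall x y, Om x y ->
    dot (Px N x y) (Py N x y) + dot (N x y) (Px (Py N) x y) = 0 /\
    dot (Py N x y) (Py N x y) + dot (N x y) (Py (Py N) x y) = 0).
  { intros x y H.
    destruct (orth_deriv Om (c1 N) (c2 N) (c3 N) (pdy (c1 N)) (pdy (c2 N)) (pdy (c3 N)) 0 HOm SN1 SN2 SN3 SY1 SY2 SY3
      (fun x y H => proj2 (Hnu x y H)) x y H) as [E1 E2].
    split.
    - change (pdx (c1 N) x y * pdy (c1 N) x y + pdx (c2 N) x y * pdy (c2 N) x y + pdx (c3 N) x y * pdy (c3 N) x y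
      + (c1 N x y * pdx (pdy (c1 N)) x y + c2 N x y * pdx (pdy (c2 N)) x y + c3 N x y * pdx (pdy (c3 N)) x y) = 0).
      lra.
    - change (pdy (c1 N) x y * pdy (c1 N) x y + pdy (c2 N) x y * pdy (c2 N) x y + pdy (c3 N) x y * pdy (c3 N) x y
      + (c1 N x y * pdy (pdy (c1 N)) x y + c2 N x y * pdy (pdy (c2 N)) x y + c3 N x y * pdy (pdy (c3 N)) x y) = 0).
      lra. }
  assert (Ht : exists t, t * t = 1 /\ Qf N t p1 p2 <> 0).
  { assert (Hab : 0 < dot (Px N p1 p2) (Px N p1 p2) + dot (Py N p1 p2) (Py N p1 p2)).
    { assert (0 <= dot (Px N p1 p2) (Px N p1 p2)).
      { unfold dot. nra. }
      assert (0 <= dot (Py N p1 p2) (Py N p1 p2)).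
      { unfold dot. nra. }
      destruct Hrank as [h|h]; apply dot_pos in h; lra. }
    unfold Qf.
    destruct (Req_dec (dot (Px N p1 p2) (Px N p1 p2) + dot (Py N p1 p2) (Py N p1 p2) +
       2 * 1 * dot (N p1 p2) (cross (Px N p1 p2) (Py N p1 p2))) 0) as [h|h].
    - exists (-1). split; [ring|]. lra.
    - exists 1. split; [ring|]. exact h. }
  destruct Ht as [t [Htt HtQ]].
  set (U := fun x y => Om x y /\ Qf N t x y <> 0).
  assert (HUO : forall x y, U x y -> Om x y) by (intros x y [h _]; exact h).
  assert (HcQ : forall x y, Om x y -> continuity_2d_pt (Qf N t) x y).
  { intros x y H.
    exact (cont_poly (c1 N) (c2 N) (c3 N) (pdx (c1 N)) (pdx (c2 N)) (pdx (c3 N))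
      (pdy (c1 N)) (pdy (c2 N)) (pdy (c3 N)) t x y
      (proj2 (proj2 (SN1 nil x y H))) (proj2 (proj2 (SN2 nil x y H))) (proj2 (proj2 (SN3 nil x y H)))
      (proj2 (proj2 (SX1 nil x y H))) (proj2 (proj2 (SX2 nil x y H))) (proj2 (proj2 (SX3 nil x y H)))
      (proj2 (proj2 (SY1 nil x y H))) (proj2 (proj2 (SY2 nil x y H))) (proj2 (proj2 (SY3 nil x y H)))). }
  assert (HU : open2 U).
  { apply open2_of_loc. intros x y [H1 H2].
    apply loc2d_and.
    - exact (open2_box Om x y HOm H1).
    - exact (continuity_2d_pt_neq_0 _ x y (HcQ x y H1) H2). }
  exists U. split; [exact HU|]. split; [split; auto|]. split; [exact HUO|].
  exists (fun x y => vadd (f x y) (vscal (-t) (N x y))).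
  assert (EgX : forall x y, Om x y ->
    Px (fun x y => vadd (f x y) (vscal (-t) (N x y))) x y =
    vadd (cross (N x y) (Py N x y)) (vscal (-t) (Px N x y))).
  { intros x y H. destruct (exN x y H) as [eX [eY _]]. destruct (Hf x y H) as [hx hy].
    rewrite Px_vadd.
    - rewrite Px_vscal, (Px_has _ _ _ _ hx). reflexivity.
    - exact (exdx_has _ _ _ _ hx).
    - apply exdx_vscal. exact eX. }
  assert (EgY : forall x y, Om x y ->
    Py (fun x y => vadd (f x y) (vscal (-t) (N x y))) x y =
    vadd (vopp (cross (N x y) (Px N x y))) (vscal (-t) (Py N x y))).
  { intros x y H. destruct (exN x y H) as [eX [eY _]]. destruct (Hf x y H) as [hx hy].
    rewrite Py_vadd.
    - rewrite Py_vscal, (Py_has _ _ _ _ hy). reflexivity.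
    - exact (exdy_has _ _ _ _ hy).
    - apply exdy_vscal. exact eY. }
  assert (Exx : forall x y, Om x y ->
    Px (Px (fun x y => vadd (f x y) (vscal (-t) (N x y)))) x y =
    vadd (vadd (cross (Px N x y) (Py N x y)) (cross (N x y) (Px (Py N) x y))) (vscal (-t) (Px (Px N) x y))).
  { intros x y H. destruct (exN x y H) as [eX [eY [eXX [eXY [eYX eYY]]]]].
    rewrite (Px_ext_loc Om _ _ x y HOm H EgX).
    rewrite Px_vadd.
    - rewrite Px_cross, Px_vscal; auto.
    - apply exdx_cross; auto.
    - apply exdx_vscal; auto. }
  assert (Exy : forall x y, Om x y ->
    Px (Py (fun x y => vadd (f x y) (vscal (-t) (N x y)))) x y =
    vadd (vopp (vadd (cross (Px N x y) (Px N x y)) (cross (N x y) (Px (Px N) x y)))) (vscal (-t) (Px (Py N) x y))).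
  { intros x y H. destruct (exN x y H) as [eX [eY [eXX [eXY [eYX eYY]]]]].
    rewrite (Px_ext_loc Om _ _ x y HOm H EgY).
    rewrite Px_vadd.
    - rewrite Px_vopp, Px_cross, Px_vscal; auto.
    - apply exdx_vopp. apply exdx_cross; auto.
    - apply exdx_vscal; auto. }
  assert (Eyy : forall x y, Om x y ->
    Py (Py (fun x y => vadd (f x y) (vscal (-t) (N x y)))) x y =
    vadd (vopp (vadd (cross (Py N x y) (Px N x y)) (cross (N x y) (Py (Px N) x y)))) (vscal (-t) (Py (Py N) x y))).
  { intros x y H. destruct (exN x y H) as [eX [eY [eXX [eXY [eYX eYY]]]]].
    rewrite (Py_ext_loc Om _ _ x y HOm H EgY).
    rewrite Py_vadd.
    - rewrite Py_vopp, Py_cross, Py_vscal; auto.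
    - apply exdy_vopp. apply exdy_cross; auto.
    - apply exdy_vscal; auto. }
  split; [|split; [|split]].
  -
    unfold smooth. split; [|split].
    + apply (sm_sub U Om); [exact HUO|].
      apply sm_ext with (G := fun x y => c1 f x y + (fun _ _ => -t) x y * c1 N x y); [exact HOm | intros; reflexivity |].
      apply sm_plus; [exact HOm| |].
      * apply (sm_fcomp Om (c1 f) (fun x y => c2 N x y * pdy (c3 N) x y - c3 N x y * pdy (c2 N) x y)
          (fun x y => -1 * (c2 N x y * pdx (c3 N) x y - c3 N x y * pdx (c2 N) x y))); [exact HOm | | |].
        -- apply sm_minus; [exact HOm| apply sm_mult; auto | apply sm_mult; auto].
        -- apply sm_mult; [exact HOm | apply sm_const |]. apply sm_minus; [exact HOm| apply sm_mult; auto | apply sm_mult; auto].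
        -- intros x y H. destruct (Hf x y H) as [[a1 [a2 a3]] [b1 [b2 b3]]]. split; [exact a1 | exact b1].
      * apply sm_mult; [exact HOm | apply sm_const | assumption].
    + apply (sm_sub U Om); [exact HUO|].
      apply sm_ext with (G := fun x y => c2 f x y + (fun _ _ => -t) x y * c2 N x y); [exact HOm | intros; reflexivity |].
      apply sm_plus; [exact HOm| |].
      * apply (sm_fcomp Om (c2 f) (fun x y => c3 N x y * pdy (c1 N) x y - c1 N x y * pdy (c3 N) x y)
          (fun x y => -1 * (c3 N x y * pdx (c1 N) x y - c1 N x y * pdx (c3 N) x y))); [exact HOm | | |].
        -- apply sm_minus; [exact HOm| apply sm_mult; auto | apply sm_mult; auto].
        -- apply sm_mult; [exact HOm | apply sm_const |]. apply sm_minus; [exact HOm| apply sm_mult; auto | apply sm_mult; auto].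
        -- intros x y H. destruct (Hf x y H) as [[a1 [a2 a3]] [b1 [b2 b3]]]. split; [exact a2 | exact b2].
      * apply sm_mult; [exact HOm | apply sm_const | assumption].
    + apply (sm_sub U Om); [exact HUO|].
      apply sm_ext with (G := fun x y => c3 f x y + (fun _ _ => -t) x y * c3 N x y); [exact HOm | intros; reflexivity |].
      apply sm_plus; [exact HOm| |].
      * apply (sm_fcomp Om (c3 f) (fun x y => c1 N x y * pdy (c2 N) x y - c2 N x y * pdy (c1 N) x y)
          (fun x y => -1 * (c1 N x y * pdx (c2 N) x y - c2 N x y * pdx (c1 N) x y))); [exact HOm | | |].
        -- apply sm_minus; [exact HOm| apply sm_mult; auto | apply sm_mult; auto].
        -- apply sm_mult; [exact HOm | apply sm_const |]. apply sm_minus; [exact HOm| apply sm_mult; auto | apply sm_mult; auto].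
        -- intros x y H. destruct (Hf x y H) as [[a1 [a2 a3]] [b1 [b2 b3]]]. split; [exact a3 | exact b3].
      * apply sm_mult; [exact HOm | apply sm_const | assumption].
  - intros x y HxyU. assert (H := HUO x y HxyU).
    destruct (alg t (N x y) (Px N x y) (Py N x y) (Px (Px N) x y) (Px (Py N) x y) (Py (Px N) x y) (Py (Py N) x y)
      Htt (Hunit x y H) (proj1 (Hnu x y H)) (proj2 (Hnu x y H)) (H2x x y H)
      (proj1 (H2y x y H)) (proj2 (H2y x y H)) (proj2 HxyU)) as [R1 [R2 [R3 R4]]].
    unfold regular_at. rewrite (EgX x y H), (EgY x y H). auto.
  - exists (t / 2). intros x y HxyU. assert (H := HUO x y HxyU).
    destruct (alg t (N x y) (Px N x y) (Py N x y) (Px (Px N) x y) (Px (Py N) x y) (Py (Px N) x y) (Py (Py N) x y)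
      Htt (Hunit x y H) (proj1 (Hnu x y H)) (proj2 (Hnu x y H)) (H2x x y H)
      (proj1 (H2y x y H)) (proj2 (H2y x y H)) (proj2 HxyU)) as [R1 [R2 [R3 R4]]].
    unfold mean_curv. cbv zeta.
    rewrite (EgX x y H), (EgY x y H), (Exx x y H), (Exy x y H), (Eyy x y H). exact R4.
  - exists t. intros x y _. apply vec_eq3; unfold vadd, vscal, vx, vy, vz, mkv; simpl; ring.
Qed.
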